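(* For every $\theta\in\mathbb R$, the operator $\widetilde U_\theta$ maps $\widetilde{\mathcal H}$ into itself and is unitary on $\widetilde{\mathcal H}$: $\widetilde U_\theta\widetilde U_\theta^*=\widetilde U_\theta^*\widetilde U_\theta=\mathbb 1$.
   Context: Let $\Bbbk\geq3$ and $\mathcal H=(\mathbb C^2)^{\otimes\Bbbk}$ with orthonormal basis $|\mathrm x\rangle=|\mathrm x_1\rangle\otimes\cdots\otimes|\mathrm x_\Bbbk\rangle$, $\mathrm x_i\in\{0,1\}$. For $j\in\{0,1\}$, $P_{[\![j]\!]}$ is the orthogonal projection onto the span of the $|\mathrm x\rangle$ with $\mathrm x_1=j$. Let $\mathbf U$ be a $2\times2$ unitary matrix all of whose entries have modulus $2^{-1/2}$, and define the unitary $\bar U$ on $\mathcal H$ by $\bar U|\mathrm x\rangle=|\mathrm x_2\rangle\otimes\cdots\otimes|\mathrm x_\Bbbk\rangle\otimes\mathbf U|\mathrm x_1\rangle$. Let $\sigma$ be the unitary exchanging the last two tensor factors: $\sigma(|\mathrm x_1\rangle\otimes\cdots\otimes|\mathrm x_{\Bbbk-1}\rangle\otimes|\mathrm x_\Bbbk\rangle)=|\mathrm x_1\rangle\otimes\cdots\otimes|\mathrm x_\Bbbk\rangle\otimes|\mathrm x_{\Bbbk-1}\rangle$. Put $P'_{[\![j]\!]}=\bar UP_{[\![j]\!]}\bar U^*$. The tower Hilbert space is $\widetilde{\mathcal H}=\mathcal H\oplus P'_{[\![1]\!]}\mathcal H$ with scalar product $\langle(\phi_0,\phi_1),(\phi_0',\phi_1')\rangle=\langle\phi_0,\phi_0'\rangle+\langle\phi_1,\phi_1'\rangle$,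 and for $\theta\in\mathbb R$, $\widetilde U_\theta(\phi_0,\phi_1)=\big(\sigma\bar U P'_{[\![1]\!]}\phi_1+\bar UP_{[\![0]\!]}\phi_0,\ e^{i\theta}\bar UP_{[\![1]\!]}\phi_0\big)$. *)

(* Defs.v *)
From mathcomp Require Import all_boot all_algebra.
From mathcomp Require Import reals trigo.
From mathcomp Require Export complex.
Set Implicit Arguments. Unset Strict Implicit. Unset Printing Implicit Defensive.
Import GRing.Theory Num.Theory.
Local Open Scope ring_scope.
Local Open Scope complex_scope.

Section Ops.
Variable C : nzRingType.
Variable T : finType.

(* Linear operators on C^T are given by their kernels (matrix entries
   <y| A |x> = A y x) in the orthonormal basis indexed by T. *)
Definition op := T -> T -> C.
Definition vect := T -> C.

Definition opmul (A B : op) : op := fun y x => \sum_(z : T) A y z * B z x.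
Definition opapp (A : op) (v : vect) : vect := fun y => \sum_(x : T) A y x * v x.
Definition opid : op := fun y x => if y == x then 1 else 0.
End Ops.

Definition opadj (R : rcfType) (T : finType) (A : op R[i] T) : op R[i] T :=
  fun y x => (A x y)^*.

(* basis |x> = |x_1> (x) ... (x) |x_k> of (C^2)^(x)k, x_{j+1} = nth false x j *)
Definition basis (k : nat) := k.-tuple bool.
Definition bit (x : seq bool) (j : nat) : bool := nth false x j.
Definition b2o (b : bool) : 'I_2 := if b then ord_max else ord0.

Section Tower.
Variables (R : realType) (k : nat) (U : 'M[R[i]]_2) (theta : R).
Local Notation B := (basis k).
Local Notation C := (R[i]).

Definition Pj (j : bool) : op C B :=
  fun y x => if (y == x) && (bit x 0 == j) then 1 else 0.

(* Ubar |x> = |x_2> (x) ... (x) |x_k> (x) U |x_1>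
   = sum_b U_{b,x_1} |x_2 ... x_k b> *)
Definition Ubar : op C B :=
  fun y x =>
    if [forall j : 'I_k, (j.+1 < k)%N ==> (bit y j == bit x j.+1)]
    then U (b2o (bit y k.-1)) (b2o (bit x 0)) else 0.

Definition swp (j : nat) : nat :=
  if j == k.-2 then k.-1 else if j == k.-1 then k.-2 else j.
Definition sigma : op C B :=
  fun y x => if [forall j : 'I_k, bit y j == bit x (swp j)] then 1 else 0.

Definition Pj' (j : bool) : op C B := opmul (opmul Ubar (Pj j)) (opadj Ubar).

Definition expi : C := cos theta +i* sin theta.

(* The tower space H~ = H (+) P'_[[1]] H is realized as the subspace of
   H (+) H = C^(B + B) (first component indexed by inl, second by inr)
   which is the range of the orthogonal projection Qt = 1 (+) P'_[[1]];
   its scalar product is the restriction of the standard one. *)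
Definition Qt : op C (B + B)%type :=
  fun y x => match y, x with
             | inl y, inl x => @opid C B y x
             | inr y, inr x => Pj' true y x
             | _, _ => 0
             end.

Definition in_tower (v : vect C (B + B)%type) : Prop := opapp Qt v = v.

(* U~_theta (phi0, phi1) =
   (sigma Ubar P'_[[1]] phi1 + Ubar P_[[0]] phi0, e^{i theta} Ubar P_[[1]] phi0) *)
Definition Utilde : op C (B + B)%type :=
  fun y x => match y, x with
             | inl y, inl x => opmul Ubar (Pj false) y x
             | inl y, inr x => opmul (opmul sigma Ubar) (Pj' true) y x
             | inr y, inl x => expi * opmul Ubar (Pj true) y x
             | inr y, inr x => 0
             end.
End Tower.

(* Main.v *)
Require Import Defs.
From mathcomp Require Import all_boot all_algebra.
From mathcomp Require Import reals trigo complex.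
From mathcomp Require Import zify ring.
From Stdlib Require Import FunctionalExtensionality.
Import GRing.Theory Num.Theory.
Local Open Scope ring_scope.
Local Open Scope complex_scope.
Set Implicit Arguments. Unset Strict Implicit. Unset Printing Implicit Defensive.

Section Gen.
Variable R : realType.
Local Notation C := (R[i]).

Definition vadd (T : finType) (v w : vect C T) : vect C T := fun x => v x + w x.
Definition vscale (T : finType) (c : C) (v : vect C T) : vect C T := fun x => c * v x.
Definition vzero (T : finType) : vect C T := fun _ => 0.

Lemma opapp_mul (T : finType) (A B : op C T) v :
  opapp (opmul A B) v = opapp A (opapp B v).
Proof.
apply: functional_extensionality => y; rewrite /opapp /opmul.
under eq_bigr do rewrite big_distrl.
rewrite exchange_big; apply: eq_bigr => z _; rewrite big_distrr.
apply: eq_bigr => x _; exact/esym/mulrA.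
Qed.

Lemma opadj_mul (T : finType) (A B : op C T) :
  opadj (opmul A B) = opmul (opadj B) (opadj A).
Proof.
apply: functional_extensionality => y; apply: functional_extensionality => x.
rewrite /opadj /opmul rmorph_sum; apply: eq_bigr => z _.
by rewrite rmorphM mulrC.
Qed.

Lemma opadjK (T : finType) (A : op C T) : opadj (opadj A) = A.
Proof.
apply: functional_extensionality => y; apply: functional_extensionality => x.
by rewrite /opadj conjcK.
Qed.

Lemma app_vadd (T : finType) (A : op C T) v w :
  opapp A (vadd v w) = vadd (opapp A v) (opapp A w).
Proof.
apply: functional_extensionality => y; rewrite /opapp /vadd -big_split /=.
by apply: eq_bigr => x _; rewrite mulrDr.
Qed.

Lemma app_vscale (T : finType) (A : op C T) c v :
  opapp A (vscale c v) = vscale c (opapp A v).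
Proof.
apply: functional_extensionality => y; rewrite /opapp /vscale big_distrr /=.
by apply: eq_bigr => x _; rewrite mulrCA.
Qed.

Lemma app_vzero (T : finType) (A : op C T) : opapp A (@vzero T) = @vzero T.
Proof.
apply: functional_extensionality => y; rewrite /opapp /vzero.
by rewrite big1 // => x _; rewrite mulr0.
Qed.

Lemma vscaleA (T : finType) c d (v : vect C T) :
  vscale c (vscale d v) = vscale (c * d) v.
Proof. by apply: functional_extensionality => y; rewrite /vscale mulrA. Qed.

Lemma vscale1 (T : finType) (v : vect C T) : vscale 1 v = v.
Proof. by apply: functional_extensionality => y; rewrite /vscale mul1r. Qed.

Lemma vscale0 (T : finType) c : vscale c (@vzero T) = @vzero T.
Proof. by apply: functional_extensionality => y; rewrite /vscale /vzero mulr0. Qed.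

Lemma vadd0 (T : finType) (v : vect C T) : vadd v (@vzero T) = v.
Proof. by apply: functional_extensionality => y; rewrite /vadd /vzero addr0. Qed.

Lemma vadd0l (T : finType) (v : vect C T) : vadd (@vzero T) v = v.
Proof. by apply: functional_extensionality => y; rewrite /vadd /vzero add0r. Qed.

Lemma sum_delta (T I : finType) (t : I -> T) (c : I -> C) (v : T -> C) :
  \sum_x (\sum_a (if x == t a then c a else 0)) * v x = \sum_a c a * v (t a).
Proof.
under eq_bigr do rewrite big_distrl.
rewrite exchange_big; apply: eq_bigr => a _.
rewrite (bigD1 (t a)) //= eqxx big1 ?addr0 // => x /negbTE ->.
by rewrite mul0r.
Qed.

Lemma sumb (F : bool -> C) : \sum_a F a = F true + F false.
Proof. by rewrite big_bool. Qed.

Lemma sum_sumT (T1 T2 : finType) (F : (T1 + T2)%type -> C) :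
  \sum_z F z = \sum_x F (inl x) + \sum_x F (inr x).
Proof. by rewrite big_sumType. Qed.

Lemma opid_app (T : finType) (v : vect C T) : opapp (@opid C T) v = v.
Proof.
apply: functional_extensionality => y; rewrite /opapp (bigD1 y) // big1 => [|x hx].
  by etransitivity; first exact: addr0; rewrite /opid eqxx mul1r.
by rewrite /opid eq_sym (negbTE hx) mul0r.
Qed.

End Gen.

Section Tup.
Variable k : nat.
Hypothesis hk : (3 <= k)%N.
Local Notation B := (basis k).

Definition mk (f : nat -> bool) : B := [tuple f (nat_of_ord j) | j < k].

Lemma bit_mk f j : (j < k)%N -> bit (mk f) j = f j.
Proof. by move=> hj; rewrite /bit -(tnth_nth false _ (Ordinal hj)) tnth_mktuple. Qed.

Lemma tup_ext (x y : B) : (forall j, (j < k)%N -> bit x j = bit y j) -> x = y.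
Proof. by move=> h; apply: eq_from_tnth => i; rewrite !(tnth_nth false); exact: h. Qed.

Definition sh (x : B) b := mk (fun j => if j == k.-1 then b else bit x j.+1).
Definition unsh (y : B) a := mk (fun j => if j == 0%N then a else bit y j.-1).
Definition sw (x : B) := mk (fun j => bit x (swp k j)).
Definition setl (y : B) b := mk (fun j => if j == k.-1 then b else bit y j).
Definition seth (y : B) a := mk (fun j => if j == 0%N then a else bit y j).

Definition cond (y x : B) := [forall j : 'I_k, (j.+1 < k)%N ==> (bit y j == bit x j.+1)].

Lemma k0 : (0 < k)%N. Proof. lia. Qed.
Lemma k1 : (k.-1 < k)%N. Proof. lia. Qed.
Lemma k2 : (k.-2 < k)%N. Proof. lia. Qed.

Lemma unshE (x y : B) a : (x == unsh y a) = cond y x && (bit x 0 == a).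
Proof.
apply/eqP/andP.
  move=> ->; split; last by rewrite bit_mk ?k0.
  apply/forallP => j; apply/implyP => hj.
  by rewrite bit_mk //=.
case=> /forallP hc /eqP h0; apply: tup_ext => j hj; rewrite bit_mk //.
case: j hj => [|j] hj //=.
have hj' : (j < k)%N by lia.
by have /implyP /(_ hj) /eqP -> := hc (Ordinal hj').
Qed.

Lemma shE (x y : B) b : (x == sh y b) = cond x y && (bit x k.-1 == b).
Proof.
apply/eqP/andP.
  move=> ->; split; last by rewrite bit_mk ?k1 ?eqxx.
  apply/forallP => j; apply/implyP => hj.
  rewrite bit_mk /=; last by lia.
  by have -> : (nat_of_ord j == k.-1) = false by apply/eqP; lia.
case=> /forallP hc /eqP h0; apply: tup_ext => j hj; rewrite bit_mk //.
case: ifP => [/eqP ->|/eqP hne] //.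
have hj' : (j.+1 < k)%N by lia.
by have /implyP /(_ hj') /eqP -> := hc (Ordinal hj).
Qed.

Lemma swp_lt j : (j < k)%N -> (swp k j < k)%N.
Proof. rewrite /swp; move=> ?; repeat (case: ifP => /eqP ?); lia. Qed.
Lemma swpK j : (j < k)%N -> swp k (swp k j) = j.
Proof.
move=> ?; rewrite /swp; case: (j =P k.-2) => [->|h1]; last case: (j =P k.-1) => [->|h2];
  repeat (case: ifP => /eqP ?); lia.
Qed.

Lemma swK x : sw (sw x) = x.
Proof.
apply: tup_ext => j hj; rewrite !bit_mk ?swp_lt // swpK //.
Qed.

Lemma sigmaE (R : realType) (y x : B) : sigma R y x = if y == sw x then 1 else 0.
Proof.
rewrite /sigma; congr (if _ then _ else _); apply/forallP/eqP.
  move=> h; apply: tup_ext => j hj; rewrite bit_mk //.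
  by have /eqP := h (Ordinal hj).
by move=> -> j; rewrite bit_mk.
Qed.

Lemma bit_unsh0 y a : bit (unsh y a) 0 = a.
Proof. by rewrite bit_mk ?k0. Qed.
Lemma bit_shl y b : bit (sh y b) k.-1 = b.
Proof. by rewrite bit_mk ?k1 ?eqxx. Qed.
Lemma sh_unsh y a b : sh (unsh y a) b = setl y b.
Proof.
apply: tup_ext => j hj; rewrite [LHS]bit_mk // [RHS]bit_mk //; case: ifP => // /eqP hne.
by rewrite bit_mk /=; last by lia.
Qed.
Lemma unsh_sh y a b : unsh (sh y b) a = seth y a.
Proof.
apply: tup_ext => j hj; rewrite [LHS]bit_mk // [RHS]bit_mk //; case: ifP => // /eqP hne.
rewrite bit_mk; last by lia.
case: ifP => /eqP h; first by lia.
by have -> : j.-1.+1 = j by lia.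
Qed.
Lemma setl_id y : setl y (bit y k.-1) = y.
Proof. by apply: tup_ext => j hj; rewrite !bit_mk //; case: ifP => // /eqP ->. Qed.
Lemma seth_id y : seth y (bit y 0) = y.
Proof. by apply: tup_ext => j hj; rewrite !bit_mk //; case: ifP => // /eqP ->. Qed.

Lemma bit_sw_l y : bit (sw y) k.-1 = bit y k.-2.
Proof. rewrite bit_mk ?k1 // /swp; case: ifP => /eqP ?; first lia; by rewrite eqxx. Qed.
Lemma bit_unsh_sw_l y a : bit (unsh (sw y) a) k.-1 = bit y k.-1.
Proof.
rewrite bit_mk ?k1 //; case: ifP => /eqP ?; first lia.
rewrite bit_mk; last lia.
by rewrite /swp; case: ifP => // /eqP ?; lia.
Qed.
Lemma bit_sw_setl_l y b : bit (sw (setl y b)) k.-1 = bit y k.-2.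
Proof.
rewrite bit_sw_l bit_mk ?k2 //; case: ifP => // /eqP ?; lia.
Qed.
Lemma setl_unsh_sw y a b : setl (unsh (sw y) a) b = unsh (sw (setl y b)) a.
Proof.
apply: tup_ext => j hj; rewrite [LHS]bit_mk // [RHS]bit_mk //.
case: (j =P 0%N) => [->|h0].
  by case: ifP => /eqP ?; [lia | rewrite bit_unsh0].
case: ifP => /eqP h1.
  subst j; rewrite bit_mk; last lia.
  have -> : swp k k.-1.-1 = k.-1 by rewrite /swp; case: ifP => /eqP ?; lia.
  by rewrite bit_mk ?k1 // eqxx.
have hs : swp k j.-1 = j.-1 by rewrite /swp; repeat (case: ifP => /eqP ?); lia.
rewrite bit_mk //; case: ifP => /eqP ?; first lia.
rewrite bit_mk; last lia.
rewrite bit_mk; last lia.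
rewrite hs bit_mk; last lia.
by case: ifP => /eqP ?; first lia.
Qed.

End Tup.

Section Ops.
Variables (R : realType) (k : nat) (U : 'M[R[i]]_2).
Hypothesis hk : (3 <= k)%N.
Hypothesis hU : U *m (map_mx conjc U)^T = 1%:M.
Local Notation B := (basis k).
Local Notation C := (R[i]).
Local Notation Ub := (@Ubar R k U).
Local Notation P := (@Pj R k).
Local Notation sg := (@sigma R k).

Lemma b2o_inj : injective b2o.
Proof. by case; case. Qed.

Lemma sum2 (F : 'I_2 -> C) : \sum_(l < 2) F l = \sum_(a : bool) F (b2o a).
Proof.
rewrite big_bool !big_ord_recr big_ord0 /= add0r /b2o addrC; congr (F _ + F _); exact: val_inj.
Qed.

Lemma UUr c b : \sum_(a : bool) U (b2o c) (b2o a) * conjc (U (b2o b) (b2o a)) = (c == b)%:R.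
Proof.
have := congr1 (fun M : 'M_2 => M (b2o c) (b2o b)) hU; rewrite -(inj_eq b2o_inj) !mxE sum2 => <-.
by apply: eq_bigr => a _; rewrite !mxE.
Qed.

Lemma UUl c b : \sum_(a : bool) conjc (U (b2o a) (b2o c)) * U (b2o a) (b2o b) = (c == b)%:R.
Proof.
have := congr1 (fun M : 'M_2 => M (b2o c) (b2o b)) (mulmx1C hU); rewrite -(inj_eq b2o_inj) !mxE sum2 => <-.
by apply: eq_bigr => a _; rewrite !mxE.
Qed.


Lemma sum_bool_delta c (f : bool -> C) : \sum_a (c == a)%:R * f a = f c.
Proof. by rewrite big_bool; case: c => /=; rewrite mul1r mul0r ?addr0 ?add0r. Qed.

Lemma Ubar_kern y x :
  Ub y x = \sum_a (if x == unsh y a then U (b2o (bit y k.-1)) (b2o a) else 0).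
Proof.
rewrite /Ubar big_bool !(unshE hk) -/(cond y x).
case: (cond y x); rewrite ?andTb ?andFb; last by rewrite /= addr0.
by case: (bit x 0); rewrite /= ?addr0 ?add0r.
Qed.

Lemma Ubar_kern' y x :
  conjc (Ub x y) = \sum_b (if x == sh y b then conjc (U (b2o b) (b2o (bit y 0))) else 0).
Proof.
rewrite /Ubar big_bool !(shE hk) -/(cond x y).
case: (cond x y); rewrite ?andTb ?andFb; last by rewrite conjc0 /= addr0.
by case: (bit x k.-1); rewrite /= ?addr0 ?add0r.
Qed.

Lemma Ub_app v y : opapp Ub v y = \sum_a U (b2o (bit y k.-1)) (b2o a) * v (unsh y a).
Proof. rewrite /opapp; under eq_bigr do rewrite Ubar_kern; exact: sum_delta. Qed.

Lemma Ubadj_app v y :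
  opapp (opadj Ub) v y = \sum_b conjc (U (b2o b) (b2o (bit y 0))) * v (sh y b).
Proof. rewrite /opapp /opadj; under eq_bigr do rewrite Ubar_kern'; exact: sum_delta. Qed.

Lemma P_app b v y : opapp (P b) v y = if bit y 0 == b then v y else 0.
Proof.
rewrite /opapp (bigD1 y) // big1 => [|x]; last first.
  by rewrite andTb => /negbTE hx; rewrite /Pj eq_sym hx mul0r.
etransitivity; first exact: addr0.
by rewrite /Pj eqxx andTb; case: ifP; rewrite ?mul1r ?mul0r.
Qed.

Lemma P_adj b : opadj (P b) = P b.
Proof.
apply: functional_extensionality => y; apply: functional_extensionality => x.
rewrite /opadj /Pj; case: (x =P y) => [->|/eqP ne].
  by rewrite eqxx andTb; case: ifP; rewrite ?conjc1 ?conjc0.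
by rewrite andFb eq_sym (negbTE ne) andFb conjc0.
Qed.

Lemma P_idem b v : opapp (P b) (opapp (P b) v) = opapp (P b) v.
Proof. by apply: functional_extensionality => y; rewrite !P_app; case: (_ == b). Qed.

Lemma P_orth b c v : b != c -> opapp (P b) (opapp (P c) v) = @vzero R B.
Proof.
move=> hbc; apply: functional_extensionality => y; rewrite !P_app /vzero.
case: ifP => // /eqP e; case: ifP => // /eqP e'; by move: hbc; rewrite -e -e' eqxx.
Qed.

Lemma P_sum v : vadd (opapp (P false) v) (opapp (P true) v) = v.
Proof.
apply: functional_extensionality => y; rewrite /vadd !P_app.
by case: (bit y 0) => /=; rewrite ?addr0 ?add0r.
Qed.

Lemma sg_app v y : opapp sg v y = v (sw y).
Proof.
rewrite /opapp; under eq_bigr do rewrite sigmaE.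
rewrite (bigD1 (sw y)) //= swK // eqxx mul1r big1 ?addr0 // => x hx.
rewrite ifF ?mul0r //; apply/eqP => e; move: hx; by rewrite e swK // eqxx.
Qed.

Lemma sgadj_app v y : opapp (opadj sg) v y = v (sw y).
Proof.
rewrite /opapp /opadj; under eq_bigr do rewrite sigmaE.
rewrite (bigD1 (sw y)) //= eqxx conjc1 mul1r big1 ?addr0 // => x /negbTE hx.
by rewrite hx conjc0 mul0r.
Qed.

Lemma sg_unit_l v : opapp (opadj sg) (opapp sg v) = v.
Proof. by apply: functional_extensionality => y; rewrite sgadj_app sg_app swK. Qed.
Lemma sg_unit_r v : opapp sg (opapp (opadj sg) v) = v.
Proof. by apply: functional_extensionality => y; rewrite sg_app sgadj_app swK. Qed.

Lemma Ub_unit_l v : opapp (opadj Ub) (opapp Ub v) = v.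
Proof.
apply: functional_extensionality => y; rewrite Ubadj_app.
under eq_bigr do rewrite Ub_app bit_shl // big_distrr.
rewrite exchange_big /=.
under eq_bigr do (under eq_bigr do rewrite mulrA unsh_sh //; rewrite -big_distrl UUl /=).
by rewrite sum_bool_delta seth_id.
Qed.

Lemma Ub_unit_r v : opapp Ub (opapp (opadj Ub) v) = v.
Proof.
apply: functional_extensionality => y; rewrite Ub_app.
under eq_bigr do rewrite Ubadj_app bit_unsh0 // big_distrr.
rewrite exchange_big /=.
under eq_bigr do (under eq_bigr do rewrite mulrA sh_unsh //; rewrite -big_distrl UUr /=).
by rewrite sum_bool_delta setl_id.
Qed.

End Ops.

Section Main.
Variables (R : realType) (k : nat) (U : 'M[R[i]]_2) (theta : R).
Hypothesis hk : (3 <= k)%N.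
Hypothesis hU : U *m (map_mx conjc U)^T = 1%:M.
Local Notation B := (basis k).
Local Notation C := (R[i]).
Local Notation Ub := (@Ubar R k U).
Local Notation P := (@Pj R k).
Local Notation sg := (@sigma R k).
Local Notation e := (@expi R theta).

Definition Pp (v : vect C B) := opapp Ub (opapp (P true) (opapp (opadj Ub) v)).

Lemma Pp_app v y : Pp v y =
  U (b2o (bit y k.-1)) (b2o true) * \sum_b conjc (U (b2o b) (b2o true)) * v (setl y b).
Proof.
rewrite /Pp (Ub_app U hk) big_bool !P_app !bit_unsh0 // eqxx /= mulr0 addr0.
rewrite (Ubadj_app U hk) bit_unsh0 //; congr (_ * _); apply: eq_bigr => b _.
by rewrite sh_unsh.
Qed.

Lemma key v : opapp sg (opapp Ub (Pp v)) = Pp (opapp sg (opapp Ub v)).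
Proof.
apply: functional_extensionality => y.
rewrite (sg_app hk) (Ub_app U hk) Pp_app !sumb !Pp_app !(sg_app hk) !(Ub_app U hk) !sumb.
rewrite !bit_unsh_sw_l // !bit_sw_setl_l // !bit_sw_l // !setl_unsh_sw //.
ring.
Qed.

Lemma Pp_idem v : Pp (Pp v) = Pp v.
Proof. by rewrite /Pp (Ub_unit_l hk hU) P_idem. Qed.

Lemma key' v : Pp (opapp (opadj Ub) (opapp (opadj sg) v)) =
   opapp (opadj Ub) (opapp (opadj sg) (Pp v)).
Proof.
rewrite -{2}[v](sg_unit_r hk) -{2}[opapp (opadj sg) v](Ub_unit_r hk hU) -key.
by rewrite (sg_unit_l hk) (Ub_unit_l hk hU).
Qed.

Lemma Pj'_app v : opapp (Pj' U true) v = Pp v.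
Proof. by rewrite /Pj' !opapp_mul. Qed.

Lemma Pj'adj_app v : opapp (opadj (Pj' U true)) v = Pp v.
Proof. by rewrite /Pj' !opadj_mul opadjK P_adj !opapp_mul. Qed.

Lemma expiJ : conjc e * e = 1.
Proof.
rewrite /expi; apply/eqP; rewrite eq_complex /= !mulNr opprK -!expr2 cos2Dsin2 eqxx /=.
by apply/eqP; ring.
Qed.

Definition vl (v : vect C (B + B)%type) : vect C B := fun x => v (inl x).
Definition vr (v : vect C (B + B)%type) : vect C B := fun x => v (inr x).
Definition vpair (a b : vect C B) : vect C (B + B)%type :=
  fun z => match z with inl x => a x | inr x => b x end.

Lemma vpair_eta v : vpair (vl v) (vr v) = v.
Proof. by apply: functional_extensionality => -[]. Qed.


Local Notation Ut := (@Utilde R k U theta).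

Lemma Ut_block a b : opapp Ut (vpair a b) =
  vpair (vadd (opapp Ub (opapp (P false) a)) (opapp sg (opapp Ub (Pp b))))
        (vscale e (opapp Ub (opapp (P true) a))).
Proof.
apply: functional_extensionality => -[y|y].
  transitivity (opapp (opmul Ub (P false)) a y + opapp (opmul (opmul sg Ub) (Pj' U true)) b y).
    by rewrite /opapp sum_sumT.
  by rewrite !opapp_mul.
transitivity (e * opapp (opmul Ub (P true)) a y).
  rewrite /opapp sum_sumT [X in _ + X]big1 ?addr0 => [|x _]; last exact: mul0r.
  by rewrite big_distrr; apply: eq_bigr => x _; exact/esym/mulrA.
by rewrite opapp_mul.
Qed.

Lemma Utadj_block a b : opapp (opadj Ut) (vpair a b) =
  vpair (vadd (opapp (P false) (opapp (opadj Ub) a))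
              (vscale (conjc e) (opapp (P true) (opapp (opadj Ub) b))))
        (Pp (opapp (opadj Ub) (opapp (opadj sg) a))).
Proof.
apply: functional_extensionality => -[y|y].
  transitivity (opapp (opadj (opmul Ub (P false))) a y +
                conjc e * opapp (opadj (opmul Ub (P true))) b y).
    rewrite /opapp /opadj sum_sumT; congr (_ + _).
    rewrite big_distrr; apply: eq_bigr => x _.
    by symmetry; etransitivity; first exact: mulrA; rewrite -rmorphM.
  by rewrite !opadj_mul !P_adj !opapp_mul.
transitivity (opapp (opadj (opmul (opmul sg Ub) (Pj' U true))) a y).
  rewrite /opapp /opadj sum_sumT [X in _ + X]big1 ?addr0 // => x _.
  by rewrite (_ : Ut (inr x) (inr y) = 0) // conjc0 mul0r.
by rewrite opadj_mul opapp_mul Pj'adj_app opadj_mul opapp_mul.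
Qed.

Lemma Qt_block a b : opapp (@Qt R k U) (vpair a b) = vpair a (Pp b).
Proof.
apply: functional_extensionality => -[y|y].
  transitivity (opapp (@opid C B) a y); last by rewrite opid_app.
  rewrite /opapp sum_sumT [X in _ + X]big1 ?addr0 // => x _; exact: mul0r.
transitivity (opapp (Pj' U true) b y); last by rewrite Pj'_app.
rewrite /opapp sum_sumT big1 ?add0r // => x _; exact: mul0r.
Qed.

Lemma Pp_vscale c w : Pp (vscale c w) = vscale c (Pp w).
Proof. by rewrite /Pp !app_vscale. Qed.
Lemma Pp_vadd w1 w2 : Pp (vadd w1 w2) = vadd (Pp w1) (Pp w2).
Proof. by rewrite /Pp !app_vadd. Qed.
Lemma Pp_Ub w : Pp (opapp Ub (opapp (P true) w)) = opapp Ub (opapp (P true) w).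
Proof. by rewrite /Pp (Ub_unit_l hk hU) P_idem. Qed.
Lemma Ubadj_Pp w : opapp (opadj Ub) (Pp w) = opapp (P true) (opapp (opadj Ub) w).
Proof. by rewrite /Pp (Ub_unit_l hk hU). Qed.
Lemma Pp_Ub0 w : Pp (opapp Ub (opapp (P false) w)) = @vzero R B.
Proof. by rewrite /Pp (Ub_unit_l hk hU) P_orth // !app_vzero. Qed.

End Main.

Theorem proposition6 (R : realType) (k : nat) (U : 'M[R[i]]_2) :
  (3 <= k)%N ->
  U *m (map_mx conjc U)^T = 1%:M ->
  (forall a b : 'I_2, `|U a b| = ((Num.sqrt (2 : R))^-1)%:C) ->
  forall theta : R,
    let Ut := @Utilde R k U theta in
    let Ut_star := opmul (@Qt R k U) (opadj Ut) in
    (forall v, @in_tower R k U v -> @in_tower R k U (opapp Ut v)) /\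
    (forall v, @in_tower R k U v -> opapp Ut (opapp Ut_star v) = v) /\
    (forall v, @in_tower R k U v -> opapp Ut_star (opapp Ut v) = v).
Proof.
move=> hk hU _ theta Ut Ut_star.
have QtE : forall v : vect R[i] (basis k + basis k)%type, in_tower U v -> Pp U (vr v) = vr v.
  move=> v hv; apply: functional_extensionality => y.
  have := congr1 (fun f => f (inr y)) hv; rewrite -{1}(vpair_eta v) Qt_block.
  by [].
split; [|split] => v hv; have hb := QtE v hv; rewrite -(vpair_eta v);
  move: (vl v) (vr v) hb => a b hb {hv QtE}.
- rewrite /in_tower Ut_block Qt_block; congr (vpair _ _).
  by rewrite Pp_vscale (Pp_Ub hk hU).
- rewrite /Ut_star opapp_mul Utadj_block Qt_block Ut_block; congr (vpair _ _).
  + rewrite !(Pp_idem hk hU) (key' hk hU) (Ub_unit_r hk hU) (sg_unit_r hk).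
    rewrite app_vadd app_vscale P_idem P_orth // vscale0 vadd0.
    by rewrite /Pp -app_vadd P_sum (Ub_unit_r hk hU).
  + rewrite app_vadd app_vscale P_orth // P_idem vadd0l app_vscale vscaleA.
    by rewrite mulrC expiJ vscale1; apply: hb.
- rewrite /Ut_star opapp_mul Ut_block Utadj_block Qt_block; congr (vpair _ _).
  + rewrite (key U hk) !app_vadd (Ubadj_Pp hk hU) ?app_vadd !app_vscale !(Ub_unit_l hk hU) !P_idem P_orth //.
    by rewrite vadd0 vscaleA expiJ vscale1 P_sum.
  + rewrite (Pp_idem hk hU) !app_vadd (sg_unit_l hk) (Ub_unit_l hk hU) Pp_vadd (key' hk hU).
    by rewrite (Pp_Ub0 hk hU) !app_vzero vadd0l (Pp_idem hk hU).
Qed.
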